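(* For every integer $a\ge 4$, setting $N=\phi(a!)$, we have $\phi(a!)\,\phi((N-1)!)=\phi(N!)$. Consequently $c(a,N-1)\le N$ and $r(a,\phi(a!)-1)<1$ for all $a\ge 4$.
   Context: $\phi$ denotes Euler's totient function. For positive integers $a,b$, $c(a,b)$ is the least positive integer $c$ such that $\phi(a!)\,\phi(b!)$ divides $\phi(c!)$, and $r(a,b)=c(a,b)/(a+b)$. *)

(* Defs.v *)
From mathcomp Require Import all_boot all_order all_algebra.
Set Implicit Arguments. Unset Strict Implicit. Unset Printing Implicit Defensive.
Import Order.TTheory GRing.Theory Num.Theory.

Definition cdiv (a b c : nat) : bool :=
  totient a`! * totient b`! %| totient c`!.

Definition is_c (a b c : nat) : Prop :=
  0 < c /\ cdiv a b c /\ (forall c', 0 < c' -> cdiv a b c' -> c <= c').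

(* r(a,b) = c / (a+b), as a rational, given the value c = c(a,b). *)
Definition r_of (a b c : nat) : rat := (c%:R / (a + b)%:R)%R.

(* Main.v *)
Require Import Defs.
From mathcomp Require Import all_boot all_order all_algebra.
From mathcomp Require Import zify ring.
Import Order.TTheory GRing.Theory Num.Theory.

Lemma totient_pmul p k : prime p -> p %| k -> 0 < k -> totient (p * k) = p * totient k.
Proof.
move=> pp pk k0.
have [m cm ->] := pfactor_coprime pp k0.
set e := logn p k.
have e0 : 0 < e by rewrite /e -(pfactor_dvdn 1 pp k0) expn1.
rewrite mulnCA -expnS !totient_coprime ?coprimeXr // 1?coprime_sym //.
rewrite !totient_pfactor //=.
have -> : p ^ e = p * p ^ e.-1 by rewrite -expnS prednK.
ring.
Qed.

Lemma totient_mul_rad m n : 0 < n -> (forall p, prime p -> p %| m -> p %| n) ->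
  totient (m * n) = m * totient n.
Proof.
move=> n0; elim/ltn_ind: m => m IH H.
case: m IH H => [|[|m]] IH H; first by rewrite mul0n.
  by rewrite !mul1n.
set M := m.+2 in IH H *.
have pp : prime (pdiv M) by apply: pdiv_prime.
have pM : pdiv M %| M by apply: pdiv_dvd.
move: (pdiv M) pp pM => p pp pM.
have [m' Em] : exists m', M = p * m'.
  by exists (M %/ p); rewrite mulnC divnK.
have m'0 : 0 < m' by move: Em; case: m' => //; rewrite muln0.
have lt : m' < M.
  rewrite Em -{1}[m'](mul1n) ltn_pmul2r //; exact: prime_gt1.
rewrite Em -mulnA totient_pmul //; last by rewrite muln_gt0 m'0.
- rewrite IH // => [|q qp qd]; first by rewrite mulnA.
  apply: H => //; rewrite Em; exact: dvdn_mull.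
- apply: dvdn_mull; exact: H.
Qed.

Lemma fact24 a : 4 <= a -> 24 %| a`!.
Proof.
elim: a => // a IH; rewrite leq_eqVlt => /orP[/eqP <- //|h].
rewrite factS; apply: dvdn_mull; exact: IH.
Qed.

Lemma four_dvd a : 4 <= a -> 4 %| totient a`!.
Proof.
move=> ha.
have pp : prime 2 by [].
have [m cm E] := pfactor_coprime pp (fact_gt0 a).
have e3 : 3 <= logn 2 a`!.
  rewrite -(pfactor_dvdn 3 pp (fact_gt0 a)).
  have h24 : 24 %| a`! by apply: fact24.
  have h8 : 2 ^ 3 %| 24 by [].
  exact: (dvdn_trans h8 h24).
rewrite E totient_coprime; last by rewrite coprime_sym; apply: coprimeXl.
rewrite totient_pfactor //; last by lia.
apply: dvdn_mull; rewrite mul1n.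
have -> : (logn 2 a`!).-1 = 2 + ((logn 2 a`!).-1 - 2) by lia.
by rewrite expnD dvdn_mulr.
Qed.

Theorem mainTheorem9 (a : nat) (ha : 4 <= a) :
  let N := totient a`! in
  totient a`! * totient (N - 1)`! = totient N`! /\
  exists c : nat, is_c a (N - 1) c /\ c <= N /\ (r_of a (N - 1) c < 1)%R.
Proof.
move=> N.
have N4 : 4 %| N by apply: four_dvd.
have N0 : 0 < N by rewrite /N totient_gt0 fact_gt0.
have Nge : 4 <= N by apply: dvdn_leq.
have key : totient a`! * totient (N - 1)`! = totient N`!.
  have -> : N`! = N * (N - 1)`!.
    have EN : N = (N - 1).+1 by lia.
    by rewrite {1}EN factS -EN.
  rewrite totient_mul_rad ?fact_gt0 // => p pp pN.
  apply: dvdn_fact; rewrite prime_gt0 //=.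
  have : p <= N by apply: dvdn_leq.
  rewrite leq_eqVlt => /orP[/eqP Ep|]; last by lia.
  exfalso; have : 2 %| N by apply: (dvdn_trans _ N4).
  rewrite -Ep => /(prime_nt_dvdP pp) /= H.
  have : p = 2 by apply/esym/H.
  by move=> E2; move: Nge; rewrite -Ep E2.
split => //.
have ex : exists c, (0 < c) && cdiv a (N - 1) c.
  by exists N; rewrite N0 /cdiv key dvdnn.
case: (ex_minnP ex) => c /andP[c0 cd] cmin.
have cN : c <= N by apply: cmin; rewrite N0 /cdiv key dvdnn.
exists c; split; first split => //; first split => //.
  by move=> c' c'0 cd'; apply: cmin; rewrite c'0.
split => //.
rewrite /r_of ltr_pdivrMr ?mul1r ?ltr_nat //; last by rewrite ltr0n; lia.
lia.
Qed.
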